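(* Let $i,j,k$ be integers with $j>0$ and $0\le k<i$, and suppose the virtual diagram $(i,j,k)$ has one component. Let $GD((i,j,k))$ be its Gauss diagram. Then $i(c)\neq 0$ for every chord $c$ of $GD((i,j,k))$.
   Context: Braid conventions: braids on $i$ strands are drawn horizontally, oriented left to right, with positions $1,\dots,i$ numbered from top to bottom, and words are read left to right. The generator $\sigma_m$ is a classical (positive) crossing at which the strand in position $m$ moves to position $m+1$, passing over the strand moving from position $m+1$ to position $m$. Virtual crossings carry no over/under information. $VB^1_{i,j}$ is obtained from $(\sigma_1\cdots\sigma_{i-1})^j$ by replacing the crossings of the first (left-most) block $\sigma_1\cdots\sigma_{i-1}$ by virtual crossings. $B_k=\sigma_k\cdots\sigma_1$, with $B_0$ trivial. $(i,j,k)$ is the closure of $VB^1_{i,j}B_k$. Gauss diagram: for an oriented virtual knot diagram, take a circle $\Gamma$ parametrizing the knot. Each classical crossing gives a chord joining its two preimages, with an arrowhead at the under-passage and labelled by the crossing sign; virtual crossings are ignored. A crossing is positive ($+1$) if the understrand passes from the right to the left of the overstrand, and negative ($-1$) otherwise. For a chord $c$, its endpoints split $\Gamma$ into open arcs $\gamma_1,\gamma_2$. Flip every chord $c'\neq c$ with one endpoint on each arc whose arrowhead lies on $\gamma_2$; flipping reverses the arrow and negates the sign. Then $i(c)$ is the sum of signs of all chords with one endpoint on each of $\gamma_1,\gamma_2$. This is well defined up to sign. *)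

(* Defs.v *)
From mathcomp Require Import all_boot all_order all_algebra.
Set Implicit Arguments. Unset Strict Implicit. Unset Printing Implicit Defensive.
Import GRing.Theory Num.Theory.

(* A braid word is a sequence of letters (m, b): the crossing between
   positions m and m+1 (positions 1..i, top to bottom); b = true for the
   classical generator sigma_m, b = false for a virtual crossing. *)
Definition letter := (nat * bool)%type.

Definition block (i : nat) (b : bool) : seq letter :=
  [seq (m, b) | m <- iota 1 i.-1].

Definition VB1 (i j : nat) : seq letter :=
  block i false ++ flatten (nseq j.-1 (block i true)).

Definition Bk (k : nat) : seq letter := [seq (m, true) | m <- rev (iota 1 k)].

Definition ijk_word (i j k : nat) : seq letter := VB1 i j ++ Bk k.

Definition step (m p : nat) : nat :=
  if p == m then m.+1 else if p == m.+1 then m else p.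

Definition braid_perm (w : seq letter) (p : nat) : nat :=
  foldl (fun q l => step l.1 q) p w.

(* the closure of the braid on i strands has exactly one component:
   the closure permutation is a single cycle on {1..i} *)
Definition one_component (i : nat) (w : seq letter) : Prop :=
  forall p, 1 <= p <= i -> exists n, iter n (braid_perm w) 1 = p.

(* Passing once through the braid from position p, list the classical
   crossings met, as (index of the letter in w, under?).  At sigma_m the
   strand at position m goes over, the one at position m+1 goes under. *)
Fixpoint pass_events (w : seq letter) (t p : nat) : seq (nat * bool) :=
  match w with
  | [::] => [::]
  | (m, b) :: w' =>
      (if b && ((p == m) || (p == m.+1)) then [:: (t, p == m.+1)] else [::])
      ++ pass_events w' t.+1 (step m p)
  end.

(* Gauss word of the closure (assumed one component), traversed starting at
   the left end of position 1: i passes through the braid.  The entries are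
   the endpoints on the circle Gamma, in cyclic order; endpoint (t, true) is
   the under-passage (arrowhead) of the chord of crossing t, (t, false) is
   its over-passage. *)
Definition gauss_word (i : nat) (w : seq letter) : seq (nat * bool) :=
  flatten [seq pass_events w 0 (iter n (braid_perm w) 1) | n <- iota 0 i].

Definition is_chord (w : seq letter) (t : nat) : bool :=
  (t < size w) && (nth (0, false) w t).2.

(* every sigma_m is a positive crossing *)
Definition chord_sign (w : seq letter) (t : nat) : int := 1.

Definition over_pos (G : seq (nat * bool)) (t : nat) : nat := index (t, false) G.
Definition under_pos (G : seq (nat * bool)) (t : nat) : nat := index (t, true) G.

(* index i(c): gamma_1 = open arc of positions strictly between the two
   endpoints of c, gamma_2 = the complementary open arc.  A chord c' <> c
   with one endpoint on each arc contributes its sign if its arrowhead lies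
   on gamma_1, and minus its sign (it is flipped) if its arrowhead lies on
   gamma_2. *)
Definition chord_index (i : nat) (w : seq letter) (c : nat) : int :=
  let G := gauss_word i w in
  let lo := minn (over_pos G c) (under_pos G c) in
  let hi := maxn (over_pos G c) (under_pos G c) in
  let in1 q := (lo < q < hi) in
  \sum_(t <- iota 0 (size w) | is_chord w t && (t != c)
         && (in1 (over_pos G t) != in1 (under_pos G t)))
     (if in1 (under_pos G t) then chord_sign w t else - chord_sign w t).

(* Main.v *)
Require Import Defs.
From mathcomp Require Import all_boot all_order all_algebra.
From mathcomp Require Import zify ring.
Set Implicit Arguments. Unset Strict Implicit. Unset Printing Implicit Defensive.
Import GRing.Theory Num.Theory.
Arguments braid_perm : simpl never.

Lemma stepK m : involutive (step m).
Proof. by move=> p; rewrite /step; do ! (case: eqP => //=); lia. Qed.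

Lemma braid_perm_cons l u p : braid_perm (l :: u) p = braid_perm u (step l.1 p).
Proof. by []. Qed.

Lemma braid_perm_cat u v p : braid_perm (u ++ v) p = braid_perm v (braid_perm u p).
Proof. by rewrite /braid_perm foldl_cat. Qed.

Lemma braid_perm_rcons u l p : braid_perm (rcons u l) p = step l.1 (braid_perm u p).
Proof. by rewrite /braid_perm foldl_rcons. Qed.

Lemma braid_permK u : cancel (braid_perm u) (braid_perm (rev u)).
Proof.
elim: u => [|l u IH] p //.
by rewrite rev_cons braid_perm_rcons braid_perm_cons IH stepK.
Qed.

Lemma braid_permKV u : cancel (braid_perm (rev u)) (braid_perm u).
Proof. by move=> p; rewrite -{1}(revK u) braid_permK. Qed.

Lemma braid_perm_inj u : injective (braid_perm u).
Proof. exact: can_inj (braid_permK u). Qed.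

Definition inrange (i : nat) (l : letter) := (0 < l.1 < i).

Lemma step_range i m p : 0 < m < i -> 0 < p <= i -> 0 < step m p <= i.
Proof. by rewrite /step; do ! (case: eqP => //=); lia. Qed.

Lemma braid_perm_range i u p : all (inrange i) u -> 0 < p <= i -> 0 < braid_perm u p <= i.
Proof.
elim: u p => [|l u IH] p // /andP [Hl Hu] Hp.
by rewrite braid_perm_cons; apply: IH => //; apply: step_range.
Qed.

Definition ev (t : nat) (l : letter) (p : nat) : seq (nat * bool) :=
  if l.2 && ((p == l.1) || (p == l.1.+1)) then [:: (t, p == l.1.+1)] else [::].

Lemma pass_events_cons l u t p :
  pass_events (l :: u) t p = ev t l p ++ pass_events u t.+1 (step l.1 p).
Proof. by case: l. Qed.

Lemma pass_events_cat u v t p :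
  pass_events (u ++ v) t p = pass_events u t p ++ pass_events v (t + size u) (braid_perm u p).
Proof.
elim: u t p => [|l u IH] t p; first by rewrite /= addn0.
by rewrite cat_cons !pass_events_cons IH catA addSnnS braid_perm_cons.
Qed.

Lemma pass_events_range u t p x : x \in pass_events u t p -> t <= x.1 < t + size u.
Proof.
elim: u t p => [|l u IH] t p //.
rewrite pass_events_cons mem_cat /ev; case: ifP => _.
  rewrite inE => /orP [/eqP -> /=| /IH /=]; lia.
move=> /IH /=; lia.
Qed.

Lemma ev_pos t l p x : x \in ev t l p -> x.1 = t /\ l.2 /\ p = (if x.2 then l.1.+1 else l.1).
Proof.
rewrite /ev; case: ifP => // /andP [-> /orP H]; rewrite inE => /eqP -> /=.
by split=> //; split=> //; case: H => /eqP ->; rewrite ?eqxx //; case: eqP => //; lia.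
Qed.

Lemma uniq_PE u t p : uniq (pass_events u t p).
Proof.
elim: u t p => [|l u IH] t p //.
rewrite pass_events_cons cat_uniq IH andbT /ev; case: ifP => //= _.
apply/hasPn => x /pass_events_range; rewrite inE; apply: contraL => /eqP -> /=; lia.
by apply/hasPn.
Qed.

Lemma pass_events_nth w t0 p : t0 < size w ->
  pass_events w 0 p = pass_events (take t0 w) 0 p ++
    ev t0 (nth (0, false) w t0) (braid_perm (take t0 w) p) ++
    pass_events (drop t0.+1 w) t0.+1 (step (nth (0, false) w t0).1 (braid_perm (take t0 w) p)).
Proof.
move=> Ht.
by rewrite -{1}(cat_take_drop t0 w) pass_events_cat (drop_nth (0, false) Ht)
  pass_events_cons size_take Ht add0n.
Qed.

Lemma mem_PE w t0 b p : ((t0, b) \in pass_events w 0 p) =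
  (t0 < size w) && ((t0, b) \in ev t0 (nth (0, false) w t0) (braid_perm (take t0 w) p)).
Proof.
case: (ltnP t0 (size w)) => Ht /=.
  rewrite (pass_events_nth p Ht) !mem_cat.
  case: (boolP (_ \in pass_events (take _ _) _ _)) => [/pass_events_range|_].
    by rewrite size_take Ht /=; lia.
  case: (boolP (_ \in pass_events (drop _ _) _ _)) => [/pass_events_range|_].
    by rewrite /=; lia.
  by rewrite orbF.
by apply/negP => /pass_events_range /=; lia.
Qed.

Lemma braid_perm_nth w t0 : t0 < size w -> forall p,
  braid_perm w p = braid_perm (drop t0.+1 w)
     (step (nth (0, false) w t0).1 (braid_perm (take t0 w) p)).
Proof.
move=> Ht p.
by rewrite -{1}(cat_take_drop t0 w) braid_perm_cat (drop_nth (0, false) Ht) braid_perm_cons.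
Qed.

Definition sgnsum (s : seq (nat * bool)) : int :=
  (count (fun x => x.2) s)%:Z - (count (fun x => ~~ x.2) s)%:Z.

Lemma sgnsum_cat s1 s2 : sgnsum (s1 ++ s2) = (sgnsum s1 + sgnsum s2)%R.
Proof. rewrite /sgnsum !count_cat !PoszD; ring. Qed.

Fixpoint vd (u : seq letter) (p : nat) : int :=
  match u with
  | [::] => 0%R
  | (m, b) :: u' => ((if b then 0 else (step m p)%:Z - p%:Z) + vd u' (step m p))%R
  end.

Lemma sgnsum_PE u t p :
  sgnsum (pass_events u t p) = ((p%:Z - (braid_perm u p)%:Z) + vd u p)%R.
Proof.
elim: u t p => [|[m b] u IH] t p; first by rewrite /sgnsum /=; ring.
rewrite pass_events_cons sgnsum_cat IH braid_perm_cons /= /ev /=.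
case: b => /=; last by rewrite /sgnsum /=; ring.
case: (eqVneq p m) => [->|Hm].
  rewrite /step eqxx (_ : (m == m.+1) = false) /sgnsum /=; last by lia.
  rewrite -addn1 PoszD; ring.
case: (eqVneq p m.+1) => [->|Hm1].
  rewrite /step eqxx (_ : (m.+1 == m) = false) /sgnsum /=; last by lia.
  rewrite -addn1 PoszD; ring.
rewrite /step (negbTE Hm) (negbTE Hm1) /sgnsum /=; ring.
Qed.

Lemma vd_cat u v p : vd (u ++ v) p = (vd u p + vd v (braid_perm u p))%R.
Proof.
elim: u p => [|[m b] u IH] p /=; first by ring.
by rewrite IH addrA.
Qed.

Lemma vd_classical u p : all (fun l => l.2) u -> vd u p = 0%R.
Proof.
elim: u p => [|[m b] u IH] p //= /andP [-> Hu]; rewrite IH //; ring.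
Qed.

Lemma vd_virtual u p : all (fun l => ~~ l.2) u -> vd u p = ((braid_perm u p)%:Z - p%:Z)%R.
Proof.
elim: u p => [|[m b] u IH] p; first by move=> /= _; ring.
rewrite braid_perm_cons /= => /andP [/negbTE -> Hu]; rewrite IH //; ring.
Qed.

Lemma perm_iota_below b n b' p : p < b ->
  braid_perm [seq (m, b') | m <- iota b n] p = p.
Proof.
elim: n b p => [|n IH] b p Hp //=.
rewrite braid_perm_cons /= IH; rewrite /step; do ! (case: eqP => //=); lia.
Qed.

Lemma perm_iota a n b' q : a < q <= a + n ->
  braid_perm [seq (m, b') | m <- iota a n] q = q.-1.
Proof.
elim: n a q => [|n IH] a q Hq; first by lia.
rewrite /= braid_perm_cons /=.
case: (eqVneq q a.+1) => [->|Hq1].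
  rewrite /step eqxx (_ : (a.+1 == a) = false); last by lia.
  by rewrite perm_iota_below.
rewrite /step (_ : (q == a) = false); last by lia.
rewrite (negbTE Hq1) IH //; lia.
Qed.

Lemma iter_inj (f : nat -> nat) n : injective f -> injective (iter n f).
Proof. move=> Hf; elim: n => [|n IH] x y //=; by move/Hf/IH. Qed.

Lemma orbit_range (f : nat -> nat) i n :
  (forall p, 0 < p <= i -> 0 < f p <= i) -> 0 < i -> 0 < iter n f 1 <= i.
Proof. move=> Hf Hi; elim: n => [|n IH] /=; [lia | exact: Hf]. Qed.

Lemma orbit_period (f : nat -> nat) d n : iter d f 1 = 1 -> iter (n %% d) f 1 = iter n f 1.
Proof.
move=> Hd; rewrite {2}(divn_eq n d) addnC iterD.
suff -> : iter (n %/ d * d) f 1 = 1 by [].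
elim: (n %/ d) => [|k IH] //.
by rewrite mulSn iterD IH.
Qed.

Lemma orbit_inj (f : nat -> nat) i a b :
  injective f ->
  (forall p, 0 < p <= i -> exists n, iter n f 1 = p) ->
  a < i -> b < i -> iter a f 1 = iter b f 1 -> a = b.
Proof.
move=> Hf Hcov.
wlog lt_ab : a b / a <= b.
  move=> W Ha Hb E; case: (leqP a b) => H; first exact: W.
  by symmetry; apply: W => //; lia.
move=> Ha Hb E.
case: (eqVneq a b) => // Hab.
pose d := b - a.
have Hd : iter d f 1 = 1.
  apply: (@iter_inj f a Hf); rewrite -iterD (_ : a + d = b) ?E //.
  rewrite /d; lia.
have d0 : 0 < d by rewrite /d; lia.
have Hsub : {subset iota 1 i <= [seq iter n f 1 | n <- iota 0 d]}.
  move=> p; rewrite mem_iota => Hp.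
  have [n Hn] := Hcov p ltac:(lia).
  apply/mapP; exists (n %% d); last by rewrite orbit_period.
  by rewrite mem_iota /= ltn_pmod.
have := uniq_leq_size (iota_uniq 1 i) Hsub.
rewrite size_map !size_iota /d; lia.
Qed.

Lemma orbit_cover (f : nat -> nat) i p :
  injective f -> (forall p, 0 < p <= i -> 0 < f p <= i) ->
  (forall p, 0 < p <= i -> exists n, iter n f 1 = p) ->
  0 < p <= i -> exists2 n, n < i & iter n f 1 = p.
Proof.
move=> Hf Hr Hcov Hp.
have Hi : 0 < i by lia.
have Hu : uniq [seq iter n f 1 | n <- iota 0 i].
  rewrite map_inj_in_uniq ?iota_uniq // => a b; rewrite !mem_iota /= => Ha Hb.
  exact: orbit_inj Hf Hcov _ _.
have Hsub : {subset [seq iter n f 1 | n <- iota 0 i] <= iota 1 i}.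
  move=> x /mapP [n _ ->]; rewrite mem_iota; have := orbit_range n Hr Hi; lia.
have [_ Heq] := uniq_min_size Hu Hsub ltac:(by rewrite size_map !size_iota).
have : p \in iota 1 i by rewrite mem_iota; lia.
rewrite -Heq => /mapP [n]; rewrite mem_iota /= => Hn ->.
by exists n.
Qed.

Lemma in1_seg (T : eqType) (A S B : seq T) e1 e2 x :
  uniq (A ++ e1 :: S ++ e2 :: B) ->
  (size A < index x (A ++ e1 :: S ++ e2 :: B) < size A + size S + 1) = (x \in S).
Proof.
rewrite cat_uniq => /and3P [_ HA /= /andP [He1 HS]].
rewrite index_cat.
case: (boolP (x \in A)) => xA.
  have := index_mem x A; rewrite xA => Hi.
  have -> : (x \in S) = false.
    apply/negP => xS; move/hasPn: HA => /(_ x); rewrite inE mem_cat xS orbT => /(_ isT).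
    by rewrite xA.
  lia.
rewrite /=; case: (eqVneq e1 x) => [<-|ne].
  have -> : (e1 \in S) = false by apply/negP => H; move: He1; rewrite mem_cat H.
  lia.
rewrite index_cat; case: (boolP (x \in S)) => xS.
  have := index_mem x S; rewrite xS; lia.
lia.
Qed.

Lemma index_e1 (T : eqType) (A S B : seq T) e1 e2 :
  uniq (A ++ e1 :: S ++ e2 :: B) -> index e1 (A ++ e1 :: S ++ e2 :: B) = size A.
Proof.
rewrite cat_uniq => /and3P [_ HA _].
rewrite index_cat; case: ifP => [H|_]; last by rewrite /= eqxx addn0.
by move/hasPn: HA => /(_ e1); rewrite inE eqxx H => /(_ isT).
Qed.

Lemma index_e2 (T : eqType) (A S B : seq T) e1 e2 :
  uniq (A ++ e1 :: S ++ e2 :: B) -> index e2 (A ++ e1 :: S ++ e2 :: B) = size A + size S + 1.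
Proof.
rewrite cat_uniq => /and3P [_ HA /= /andP [He1 HS]].
rewrite index_cat; case: ifP => [H|_].
  by move/hasPn: HA => /(_ e2); rewrite inE mem_cat inE eqxx orbT H orbT => /(_ isT).
rewrite /=; case: eqP => [E|_]; first by move: He1; rewrite E mem_cat inE eqxx orbT.
rewrite index_cat; case: ifP => [H|_].
  by move: HS; rewrite cat_uniq => /and3P [_ /hasPn /(_ e2)]; rewrite inE eqxx H => /(_ isT).
by rewrite /= eqxx; lia.
Qed.

Lemma uniq_flatten_iota (T : eqType) (f : nat -> seq T) a L :
  (forall n, uniq (f n)) ->
  (forall n n' x, a <= n < a + L -> a <= n' < a + L -> x \in f n -> x \in f n' -> n = n') ->
  uniq (flatten [seq f n | n <- iota a L]).
Proof.
elim: L a => [|L IH] a Hu Hd //=.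
rewrite cat_uniq Hu IH //=; last by move=> n n' x Hn Hn'; apply: Hd; lia.
rewrite andbT; apply/hasPn => x /flattenP [s /mapP [n Hn ->] Hx]; apply/negP => Hxa.
move: Hn; rewrite mem_iota => Hn.
have := Hd n a x ltac:(lia) ltac:(lia) Hx Hxa; lia.
Qed.

Lemma sum_ind_count (s : seq nat) (P : pred nat) :
  (\sum_(t <- s) (if P t then 1 else 0 : int))%R = Posz (count P s).
Proof.
elim: s => [|t s IH]; first by rewrite big_nil.
by rewrite big_cons IH /=; case: (P t); rewrite // PoszD add0r.
Qed.

Lemma count_events (N : nat) (ch : pred nat) (S : seq (nat * bool)) b0 :
  uniq S -> (forall x, x \in S -> ch x.1) -> (forall t, ch t -> t < N) ->
  count (fun t => ch t && ((t, b0) \in S)) (iota 0 N) = count (fun x => x.2 == b0) S.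
Proof.
move=> HuS HS HN.
rewrite -!size_filter.
rewrite -(size_map (fun t => (t, b0))).
apply: perm_size; apply: uniq_perm.
- rewrite map_inj_uniq ?filter_uniq ?iota_uniq //.
  by move=> x y [].
- by rewrite filter_uniq.
move=> [t b]; rewrite mem_filter /=.
apply/mapP/idP.
  move=> [t' ]; rewrite mem_filter => /andP [/andP [_ Ht'] _] [-> ->].
  by rewrite eqxx.
move=> /andP [/eqP -> Hx]; exists t => //.
rewrite mem_filter mem_iota Hx andbT /=.
have := HS _ Hx => /= Hc; rewrite Hc /=; exact: HN.
Qed.

Lemma sum_to_sgn (N c : nat) (ch : pred nat) (S : seq (nat * bool)) :
  uniq S -> (forall x, x \in S -> ch x.1) -> (forall t, ch t -> t < N) ->
  (forall b, (c, b) \notin S) ->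
  (\sum_(t <- iota 0 N | ch t && (t != c) && (((t, false) \in S) != ((t, true) \in S)))
      (if (t, true) \in S then (1 : int) else - 1))%R = sgnsum S.
Proof.
move=> HuS HS HN Hc.
rewrite big_mkcond /=.
transitivity (\sum_(t <- iota 0 N)
   ((if ch t && ((t, true) \in S) then 1 else 0) -
    (if ch t && ((t, false) \in S) then 1 else 0)) : int)%R.
  apply: eq_bigr => t _.
  case: (eqVneq t c) => [->|ne] /=.
    by rewrite (negbTE (Hc true)) (negbTE (Hc false)) !andbF subr0.
  case: (ch t) => /=; last by rewrite subr0.
  by case: ((t, false) \in S); case: ((t, true) \in S).
rewrite sumrB !sum_ind_count !count_events //.
rewrite /sgnsum; congr (_ - _)%R; congr Posz; apply: eq_count => x.
  by rewrite eqb_id.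
by rewrite eqbF_neg.
Qed.

Lemma iota_cons_split a b n : a <= b < a + n ->
  iota a n = iota a (b - a) ++ b :: iota b.+1 (a + n - b.+1).
Proof.
move=> H.
have -> : iota a n = iota a ((b - a) + (a + n - b)) by congr iota; lia.
rewrite iotaD (_ : a + (b - a) = b); last by lia.
by rewrite (_ : a + n - b = (a + n - b.+1).+1) //; lia.
Qed.

Lemma sgnsum_mid w (q : nat -> nat) a L :
  (forall n, q n.+1 = braid_perm w (q n)) ->
  (forall n, a <= n < a + L -> vd w (q n) = (- 1)%R) ->
  sgnsum (flatten [seq pass_events w 0 (q n) | n <- iota a L]) =
    ((q a)%:Z - (q (a + L)%N)%:Z - L%:Z)%R.
Proof.
move=> Hq; elim: L a => [|L IH] a Hv; first by rewrite /sgnsum addn0 /=; ring.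
rewrite /= sgnsum_cat sgnsum_PE IH; last by move=> n Hn; apply: Hv; lia.
rewrite Hv; last by lia.
rewrite -Hq addSnnS (_ : Posz L.+1 = (Posz L + 1)%R); [ring | by rewrite -addn1 PoszD].
Qed.

Lemma main i w R c :
  w = block i false ++ R -> all (fun l => l.2) R -> all (inrange i) w ->
  one_component i w -> is_chord w c -> (chord_index i w c < 0)%R.
Proof.
move=> Hw HR Hrange Hone Hc.
have Pinj : injective (braid_perm w) := @braid_perm_inj w.
have Prange : forall p, 0 < p <= i -> 0 < braid_perm w p <= i.
  by move=> p; apply: braid_perm_range.
have Hcs : c < size w by case/andP: Hc.
have Hc2 : (nth (0, false) w c).2 by case/andP: Hc.
have Hxr : inrange i (nth (0, false) w c) by apply: (allP Hrange); apply: mem_nth.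
move: Hc2 Hxr.
case Hx : (nth (0, false) w c) => [m []] //= _ Hmr.
rewrite /inrange /= in Hmr.
have Hcov : forall p, 0 < p <= i -> exists n, iter n (braid_perm w) 1 = p.
  by move=> p Hp; apply: Hone.
pose q n := iter n (braid_perm w) 1.
have qinj : forall a b, a < i -> b < i -> q a = q b -> a = b.
  by move=> a b; apply: orbit_inj Pinj Hcov.
have qcov : forall p, 0 < p <= i -> exists2 n, n < i & q n = p.
  by move=> p; apply: orbit_cover Pinj Prange Hcov.
have Hi : 0 < i by lia.
have qr : forall n, 0 < q n <= i by move=> n; apply: orbit_range.
have qS : forall n, q n.+1 = braid_perm w (q n) by [].
pose w1 := take c w. pose w2 := drop c.+1 w.
have HPw : forall p, braid_perm w p = braid_perm w2 (step m (braid_perm w1 p)).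
  by move=> p; rewrite (braid_perm_nth Hcs) Hx.
have HPE : forall p, pass_events w 0 p = pass_events w1 0 p ++
    ev c (m, true) (braid_perm w1 p) ++ pass_events w2 c.+1 (step m (braid_perm w1 p)).
  by move=> p; rewrite (pass_events_nth p Hcs) Hx.
have Hbs : size (block i false) = i.-1 by rewrite /block size_map size_iota.
have Hcge : i.-1 <= c.
  case: (ltnP c i.-1) => // H.
  move: Hx; rewrite Hw nth_cat Hbs H /block (nth_map 0) ?size_iota //.
have vdw : forall p, 1 < p <= i -> vd w p = (- 1)%R.
  move=> p Hp; rewrite Hw vd_cat vd_virtual; last by rewrite /block all_map; apply/allP.
  rewrite vd_classical // addr0 /block perm_iota; last by lia.
  have -> : Posz p = (Posz p.-1 + 1)%R by rewrite -PoszD addn1 prednK //; lia.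
  ring.
have Hw2 : all (fun l => l.2) (drop c w).
  rewrite Hw drop_cat Hbs ltnNge Hcge /=.
  by apply/allP => y /mem_drop; apply: (allP HR).
have vdw1 : forall p, vd w1 p = vd w p.
  move=> p; rewrite -[in RHS](cat_take_drop c w) vd_cat (vd_classical _ Hw2) addr0 //.
have vdw2 : forall p, vd w2 p = 0%R.
  move=> p; apply: vd_classical; apply/allP => y Hy; apply: (allP Hw2).
  rewrite (drop_nth (0, false) Hcs); exact: (@mem_behead _ (_ :: _)).
have Hw1r : all (inrange i) (rev w1).
  by rewrite all_rev; apply/allP => y /mem_take; apply: (allP Hrange).
have Hfind : forall v, 0 < v <= i -> exists2 n, n < i & braid_perm w1 (q n) = v.
  move=> v Hv; have [n Hn Hqn] := qcov _ (braid_perm_range Hw1r Hv).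
  by exists n => //; rewrite Hqn braid_permKV.
have [no Hno Ho] := Hfind m ltac:(lia).
have [nu Hnu Hu] := Hfind m.+1 ltac:(lia).
have q0 : forall n, 0 < n < i -> 1 < q n.
  move=> n Hn; have := qr n; case: (eqVneq (q n) 1) => [E|]; last by lia.
  by have := qinj n 0 ltac:(lia) ltac:(lia) E; lia.
have core : forall n1 n2, n1 < n2 < i ->
    braid_perm w1 (q n1) \in [:: m; m.+1] -> braid_perm w1 (q n2) \in [:: m; m.+1] ->
    braid_perm w1 (q n1) != braid_perm w1 (q n2) -> (chord_index i w c < 0)%R.
  move=> n1 n2 Hn12 Ha1 Ha2 Hne.
  set a1 := braid_perm w1 (q n1) in Ha1 Hne.
  set a2 := braid_perm w1 (q n2) in Ha2 Hne.
  have Hstep : step m a1 = a2.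
    move: Ha1 Ha2 Hne; rewrite !inE /step.
    by do ! (case: eqP => //=); lia.
  have Hd : (a1 == m.+1) != (a2 == m.+1).
    by move: Ha1 Ha2 Hne; rewrite !inE; do ! (case: eqP => //=); lia.
  pose e1 := (c, a1 == m.+1). pose e2 := (c, a2 == m.+1).
  have ev1 : ev c (m, true) a1 = [:: e1] by rewrite /ev /=; move: Ha1; rewrite !inE => ->.
  have ev2 : ev c (m, true) a2 = [:: e2] by rewrite /ev /=; move: Ha2; rewrite !inE => ->.
  pose PE n := pass_events w 0 (q n).
  pose A := flatten [seq PE n | n <- iota 0 n1] ++ pass_events w1 0 (q n1).
  pose S := pass_events w2 c.+1 (step m a1) ++
     flatten [seq PE n | n <- iota n1.+1 (n2 - n1.+1)] ++ pass_events w1 0 (q n2).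
  pose B := pass_events w2 c.+1 (step m a2) ++
     flatten [seq PE n | n <- iota n2.+1 (i - n2.+1)].
  have HG : gauss_word i w = A ++ e1 :: S ++ e2 :: B.
    rewrite /gauss_word (@iota_cons_split 0 n1 i); last by lia.
    rewrite (@iota_cons_split n1.+1 n2 (0 + i - n1.+1)); last by lia.
    rewrite (_ : n1.+1 + (0 + i - n1.+1) - n2.+1 = i - n2.+1); last by lia.
    rewrite subn0 map_cat flatten_cat /= map_cat flatten_cat /=.
    rewrite -/(q n1) -/(q n2) !HPE -/a1 -/a2 ev1 ev2.
    by rewrite /A /S /B -!catA.
  have HuG : uniq (gauss_word i w).
    rewrite /gauss_word; apply: uniq_flatten_iota => [n|n n' [t b] Hn Hn']; first exact: uniq_PE.
    rewrite !mem_PE => /andP [_ /ev_pos [_ [_ E1]]] /andP [_ /ev_pos [_ [_ E2]]].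
    apply: qinj; [lia | lia |].
    by apply: (@braid_perm_inj (take t w)); rewrite E1 E2.
  have HGmem : forall y, y \in gauss_word i w -> is_chord w y.1.
    move=> [t b] /flattenP [s0 /mapP [n _ ->]].
    by rewrite mem_PE => /andP [Ht /ev_pos [_ [H2 _]]]; rewrite /is_chord Ht.
  rewrite HG in HuG HGmem.
  rewrite /chord_index /over_pos /under_pos /= HG.
  have [Hmin Hmax] : minn (index (c, false) (A ++ e1 :: S ++ e2 :: B))
                          (index (c, true) (A ++ e1 :: S ++ e2 :: B)) = size A /\
                     maxn (index (c, false) (A ++ e1 :: S ++ e2 :: B))
                          (index (c, true) (A ++ e1 :: S ++ e2 :: B)) = size A + size S + 1.
    have E1 := index_e1 HuG; have E2 := index_e2 HuG.
    case E : (a1 == m.+1).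
      have E' : (a2 == m.+1) = false.
        by apply/negP => /eqP H2; move: Hne; rewrite H2 (eqP E) eqxx.
      have -> : (c, true) = e1 by rewrite /e1 E.
      have -> : (c, false) = e2 by rewrite /e2 E'.
      rewrite E1 E2; move: (size A) (size S) => x y; split; lia.
    have E' : (a2 == m.+1).
      move: Ha1 Ha2 Hne; rewrite !inE E orbF => /eqP -> /orP [/eqP ->|//].
      by rewrite eqxx.
    have -> : (c, false) = e1 by rewrite /e1 E.
    have -> : (c, true) = e2 by rewrite /e2 E'.
    rewrite E1 E2; move: (size A) (size S) => x y; split; lia.
  rewrite Hmin Hmax.
  under eq_bigl => t do rewrite !in1_seg //.
  under eq_bigr => t _ do rewrite in1_seg //.
  rewrite /chord_sign.
  have HuS : uniq S.
    by move: HuG; rewrite cat_uniq => /and3P [_ _ /= /andP [_]]; rewrite cat_uniq => /andP [].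
  have HSmem : forall x, x \in S -> is_chord w x.1.
    move=> x Hy; apply: HGmem; rewrite mem_cat; apply/orP; right; rewrite in_cons; apply/orP; right.
    by rewrite mem_cat; apply/orP; left.
  have HcS : forall b, (c, b) \notin S.
    move: HuG; rewrite cat_uniq => /and3P [_ _ /= /andP [He1 HS2]].
    move: HS2; rewrite cat_uniq => /and3P [_ He2 _].
    move=> b; apply/negP => Hb.
    case: (eqVneq b (a1 == m.+1)) => [Eb|Eb].
      by move: He1; rewrite mem_cat /e1 -Eb Hb.
    have Eb2 : b = (a2 == m.+1).
      by move: Eb Hd; case: (b); case: (a1 == m.+1); case: (a2 == m.+1).
    by move/hasPn: He2 => /(_ (c, b)); rewrite inE /e2 -Eb2 eqxx => /(_ isT); rewrite Hb.
  rewrite (@sum_to_sgn (size w) c (is_chord w) S HuS HSmem) //; last first.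
    by move=> t /andP [].
  have Hmid : forall n, n1.+1 <= n < n1.+1 + (n2 - n1.+1) -> vd w (q n) = (- 1)%R.
    move=> n Hn; apply: vdw; have := qr n; have := q0 n ltac:(lia); lia.
  have Hb1 : braid_perm w2 (step m a1) = q n1.+1 by rewrite qS HPw.
  have Hv2 : vd w (q n2) = (- 1)%R.
    apply: vdw; have := qr n2; have := q0 n2 ltac:(lia); lia.
  have HL : (n1.+1 + (n2 - n1.+1))%N = n2 by lia.
  rewrite /S !sgnsum_cat !sgnsum_PE /PE (sgnsum_mid qS Hmid) HL Hb1 vdw2 vdw1 Hv2 Hstep -/a2.
  rewrite (_ : _ + _ = - (Posz (n2 - n1.+1)) - 1)%R; last by ring.
  by rewrite subr_lt0 (@Order.POrderTheory.le_lt_trans _ _ 0%R) // oppr_le0.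
case: (ltngtP no nu) => H.
- by apply: (core no nu); rewrite ?Ho ?Hu ?inE ?eqxx ?orbT //; lia.
- by apply: (core nu no); rewrite ?Ho ?Hu ?inE ?eqxx ?orbT //; lia.
- by move: Ho; rewrite H Hu; lia.
Qed.

Theorem lemma4p5 (i j k : nat) :
  0 < j -> k < i ->
  one_component i (ijk_word i j k) ->
  forall c : nat, is_chord (ijk_word i j k) c ->
  chord_index i (ijk_word i j k) c != 0%R.
Proof.
move=> Hj Hk Hone c Hc.
apply: ltr0_neq0.
apply: (@main i _ (flatten (nseq j.-1 (block i true)) ++ Bk k)) => //.
- by rewrite /ijk_word /VB1 -catA.
- rewrite all_cat; apply/andP; split.
    apply/allP => y /flattenP [s /nseqP [-> _]].
    by move=> /mapP [m _ ->].
  by apply/allP => y /mapP [m _ ->].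
- rewrite /ijk_word /VB1 !all_cat -andbA; apply/and3P; split.
  + by apply/allP => y /mapP [m]; rewrite mem_iota => Hm ->; rewrite /inrange /=; lia.
  + apply/allP => y /flattenP [s /nseqP [-> _]].
    by move=> /mapP [m]; rewrite mem_iota => Hm ->; rewrite /inrange /=; lia.
  + by apply/allP => y /mapP [m]; rewrite mem_rev mem_iota => Hm ->; rewrite /inrange /=; lia.
Qed.
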